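(* Let $A$ and $B$ be groups, and let $a\in A$, $b\in B$ be non-trivial elements such that at least one of $a,b$ does not have order $2$. Then for every $x\in A*B$ with $x\notin\langle ab\rangle$, we have $\langle ab\rangle\cap x\langle ab\rangle x^{-1}=\{e\}$. In particular $\langle ab\rangle$ is conjugate separated in $A*B$.
   Context: A subgroup $H$ of a group $G$ is conjugate separated if for every $x\in G\setminus H$ the intersection $H\cap xHx^{-1}$ is finite. *)

(* Defs.v *)
From Stdlib Require Import List ZArith Relations.
Import ListNotations.
Set Implicit Arguments.

Record is_group (G : Type) (mul : G -> G -> G) (inv : G -> G) (e : G) : Prop := {
  grp_assoc : forall x y z, mul x (mul y z) = mul (mul x y) z;
  grp_mul1l : forall x, mul e x = x;
  grp_mul1r : forall x, mul x e = x;
  grp_mulVl : forall x, mul (inv x) x = e;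
  grp_mulVr : forall x, mul x (inv x) = e
}.

Definition has_order2 (G : Type) (mul : G -> G -> G) (e : G) (x : G) : Prop :=
  x <> e /\ mul x x = e.

Section FreeProduct.
Variables (A B : Type).
Variables (mulA : A -> A -> A) (invA : A -> A) (eA : A).
Variables (mulB : B -> B -> B) (invB : B -> B) (eB : B).

(* Elements of A*B are represented by words in the letters of A ⊔ B. *)
Definition fword := list (A + B).

(* One elementary rewriting step of the standard presentation of A*B:
   generators A ⊔ B, relations e_A = 1, e_B = 1, x y = (x*y) within each factor. *)
Inductive fp_step : fword -> fword -> Prop :=
| fp_delA : forall u v, fp_step (u ++ inl eA :: v) (u ++ v)
| fp_delB : forall u v, fp_step (u ++ inr eB :: v) (u ++ v)
| fp_mergeA : forall u v x y,
    fp_step (u ++ inl x :: inl y :: v) (u ++ inl (mulA x y) :: v)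
| fp_mergeB : forall u v x y,
    fp_step (u ++ inr x :: inr y :: v) (u ++ inr (mulB x y) :: v).

Definition fp_eq : fword -> fword -> Prop := clos_refl_sym_trans fword fp_step.

Definition fp_one : fword := [].
Definition fp_mul (u v : fword) : fword := u ++ v.
Definition fp_letter_inv (l : A + B) : A + B :=
  match l with inl x => inl (invA x) | inr y => inr (invB y) end.
Definition fp_inv (u : fword) : fword := rev (map fp_letter_inv u).

Fixpoint fp_npow (u : fword) (n : nat) : fword :=
  match n with O => fp_one | S n => fp_mul u (fp_npow u n) end.
Definition fp_zpow (u : fword) (n : Z) : fword :=
  if (0 <=? n)%Z then fp_npow u (Z.to_nat n) else fp_npow (fp_inv u) (Z.to_nat (- n)).

Definition fp_cyclic (w : fword) (y : fword) : Prop := exists n : Z, fp_eq y (fp_zpow w n).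

Definition fp_conj_mem (H : fword -> Prop) (x y : fword) : Prop :=
  exists z, H z /\ fp_eq y (fp_mul x (fp_mul z (fp_inv x))).

(* H is conjugate separated in A*B: for x not in H, H ∩ x H x^{-1} is finite,
   i.e. covered (up to equality in A*B) by a finite list. *)
Definition fp_conj_separated (H : fword -> Prop) : Prop :=
  forall x, ~ H x ->
    exists l : list fword, forall y, H y -> fp_conj_mem H x y ->
      exists z, In z l /\ fp_eq y z.

End FreeProduct.

(* Main.v *)
Require Import Defs.
From Stdlib Require Import List ZArith Relations Lia ClassicalEpsilon.
Import ListNotations.

Section Grp.
Variables (G : Type) (mul : G -> G -> G) (inv : G -> G) (e : G).
Hypothesis HG : is_group mul inv e.

Lemma g_cancel x y : mul x y = e -> x = inv y.
Proof.
  intro H. rewrite <- (grp_mul1r HG x), <- (grp_mulVr HG y), (grp_assoc HG), H.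
  apply (grp_mul1l HG).
Qed.
Lemma g_inv_inv x : inv (inv x) = x.
Proof. symmetry. apply g_cancel. apply (grp_mulVr HG). Qed.
Lemma g_inv_e : inv e = e.
Proof. symmetry. apply g_cancel. apply (grp_mul1l HG). Qed.
Lemma g_inv_mul x y : inv (mul x y) = mul (inv y) (inv x).
Proof.
  symmetry. apply g_cancel.
  rewrite <- (grp_assoc HG), (grp_assoc HG (inv x)), (grp_mulVl HG), (grp_mul1l HG).
  apply (grp_mulVl HG).
Qed.
Lemma g_inv_ne x : x <> e -> inv x <> e.
Proof. intros H H1. apply H. rewrite <- (g_inv_inv x), H1. apply g_inv_e. Qed.
End Grp.
Arguments g_cancel {G mul inv e} HG {x y}.
Arguments g_inv_inv {G mul inv e} HG x.
Arguments g_inv_e {G mul inv e} HG.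
Arguments g_inv_mul {G mul inv e} HG x y.
Arguments g_inv_ne {G mul inv e} HG {x}.

Section FP.
Variables (A : Type) (mulA : A -> A -> A) (invA : A -> A) (eA : A).
Hypothesis HA : is_group mulA invA eA.
Variables (B : Type) (mulB : B -> B -> B) (invB : B -> B) (eB : B).
Hypothesis HB : is_group mulB invB eB.

Notation W := (fword A B).
Notation feq := (fp_eq mulA eA mulB eB).
Notation fstep := (fp_step mulA eA mulB eB).
Notation finv := (fp_inv invA invB).

Definition decA (x y : A) : {x = y} + {x <> y} := excluded_middle_informative (x = y).
Definition decB (x y : B) : {x = y} + {x <> y} := excluded_middle_informative (x = y).

Definition side (l : A + B) : bool := match l with inl _ => true | inr _ => false end.
Definition nontriv (l : A + B) : Prop := match l with inl x => x <> eA | inr y => y <> eB end.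
Definition fside (w : W) : option bool := match w with [] => None | l :: _ => Some (side l) end.
Definition lside (w : W) : option bool := fside (rev w).
Fixpoint red (w : W) : Prop :=
  match w with [] => True | l :: w' => nontriv l /\ red w' /\ fside w' <> Some (side l) end.

Definition hdA (w : W) : A * W := match w with inl y :: w' => (y, w') | _ => (eA, w) end.
Definition hdB (w : W) : B * W := match w with inr y :: w' => (y, w') | _ => (eB, w) end.
Definition mkA (z : A) (w : W) : W := if decA z eA then w else inl z :: w.
Definition mkB (z : B) (w : W) : W := if decB z eB then w else inr z :: w.
Definition act (l : A + B) (w : W) : W :=
  match l with
  | inl x => mkA (mulA x (fst (hdA w))) (snd (hdA w))
  | inr x => mkB (mulB x (fst (hdB w))) (snd (hdB w))
  end.

Lemma hdA_mkA z w : fside w <> Some true -> hdA (mkA z w) = (z, w).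
Proof.
  intro H. unfold mkA. destruct (decA z eA); [subst|reflexivity].
  destruct w as [|[y|y] w]; simpl in *; congruence.
Qed.
Lemma hdB_mkB z w : fside w <> Some false -> hdB (mkB z w) = (z, w).
Proof.
  intro H. unfold mkB. destruct (decB z eB); [subst|reflexivity].
  destruct w as [|[y|y] w]; simpl in *; congruence.
Qed.
Lemma hdA_red w : red w -> fside (snd (hdA w)) <> Some true /\ red (snd (hdA w))
  /\ mkA (fst (hdA w)) (snd (hdA w)) = w.
Proof.
  intro H. destruct w as [|[y|y] w]; simpl in *.
  - unfold mkA; destruct (decA eA eA); intuition congruence.
  - destruct H as [H1 [H2 H3]]. unfold mkA; destruct (decA y eA); intuition congruence.
  - unfold mkA; destruct (decA eA eA); intuition congruence.
Qed.
Lemma hdB_red w : red w -> fside (snd (hdB w)) <> Some false /\ red (snd (hdB w))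
  /\ mkB (fst (hdB w)) (snd (hdB w)) = w.
Proof.
  intro H. destruct w as [|[y|y] w]; simpl in *.
  - unfold mkB; destruct (decB eB eB); intuition congruence.
  - unfold mkB; destruct (decB eB eB); intuition congruence.
  - destruct H as [H1 [H2 H3]]. unfold mkB; destruct (decB y eB); intuition congruence.
Qed.
Lemma mkA_red z w : red w -> fside w <> Some true -> red (mkA z w).
Proof. intros. unfold mkA. destruct (decA z eA); simpl; auto. Qed.
Lemma mkB_red z w : red w -> fside w <> Some false -> red (mkB z w).
Proof. intros. unfold mkB. destruct (decB z eB); simpl; auto. Qed.

Lemma act_red l w : red w -> red (act l w).
Proof.
  intro H. destruct l as [x|x]; simpl.
  - destruct (hdA_red _ H) as [H1 [H2 _]]. apply mkA_red; auto.
  - destruct (hdB_red _ H) as [H1 [H2 _]]. apply mkB_red; auto.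
Qed.

Lemma act_eA w : red w -> act (inl eA) w = w.
Proof.
  intro H. simpl. rewrite (grp_mul1l HA). apply (hdA_red _ H).
Qed.
Lemma act_eB w : red w -> act (inr eB) w = w.
Proof.
  intro H. simpl. rewrite (grp_mul1l HB). apply (hdB_red _ H).
Qed.
Lemma act_mergeA x y w : red w -> act (inl x) (act (inl y) w) = act (inl (mulA x y)) w.
Proof.
  intro H. destruct (hdA_red _ H) as [H1 [H2 _]]. simpl.
  rewrite hdA_mkA by auto. simpl. rewrite (grp_assoc HA). reflexivity.
Qed.
Lemma act_mergeB x y w : red w -> act (inr x) (act (inr y) w) = act (inr (mulB x y)) w.
Proof.
  intro H. destruct (hdB_red _ H) as [H1 [H2 _]]. simpl.
  rewrite hdB_mkB by auto. simpl. rewrite (grp_assoc HB). reflexivity.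
Qed.

Lemma act_cons l w : red (l :: w) -> act l w = l :: w.
Proof.
  intros [H1 [H2 H3]]. destruct l as [x|x]; simpl in *.
  - destruct w as [|[y|y] w]; simpl in *; try congruence;
    rewrite (grp_mul1r HA); unfold mkA; destruct (decA x eA); congruence.
  - destruct w as [|[y|y] w]; simpl in *; try congruence;
    rewrite (grp_mul1r HB); unfold mkB; destruct (decB x eB); congruence.
Qed.

Definition nf (u : W) : W := fold_right act [] u.

Lemma fold_red u w : red w -> red (fold_right act w u).
Proof. induction u; simpl; auto. intro; apply act_red; auto. Qed.
Lemma nf_red u : red (nf u).
Proof. apply fold_red. simpl; auto. Qed.
Lemma nf_app u v : nf (u ++ v) = fold_right act (nf v) u.
Proof. unfold nf. apply fold_right_app. Qed.

Lemma step_nf u v : fstep u v -> nf u = nf v.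
Proof.
  intro H. destruct H; rewrite !nf_app; simpl; f_equal.
  - apply act_eA, nf_red.
  - apply act_eB, nf_red.
  - apply act_mergeA, nf_red.
  - apply act_mergeB, nf_red.
Qed.
Lemma feq_nf u v : feq u v -> nf u = nf v.
Proof.
  intro H. induction H; auto using step_nf; congruence.
Qed.
Lemma red_nf w : red w -> nf w = w.
Proof.
  induction w as [|l w IH]; simpl; auto.
  intro H. rewrite IH by apply H. apply act_cons; auto.
Qed.

Lemma feq_refl u : feq u u. Proof. apply rst_refl. Qed.
Lemma feq_sym u v : feq u v -> feq v u. Proof. apply rst_sym. Qed.
Lemma feq_trans u v w : feq u v -> feq v w -> feq u w. Proof. apply rst_trans. Qed.
Lemma feq_step u v : fstep u v -> feq u v. Proof. apply rst_step. Qed.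

Lemma step_ctx p q u v : fstep u v -> fstep (p ++ u ++ q) (p ++ v ++ q).
Proof.
  intro H. destruct H; rewrite <- !app_assoc; simpl.
  - pose proof (fp_delA mulA eA mulB eB (p ++ u) (v ++ q)) as H; rewrite <- !app_assoc in H; exact H.
  - pose proof (fp_delB mulA eA mulB eB (p ++ u) (v ++ q)) as H; rewrite <- !app_assoc in H; exact H.
  - pose proof (fp_mergeA mulA eA mulB eB (p ++ u) (v ++ q) x y) as H; rewrite <- !app_assoc in H; exact H.
  - pose proof (fp_mergeB mulA eA mulB eB (p ++ u) (v ++ q) x y) as H; rewrite <- !app_assoc in H; exact H.
Qed.
Lemma feq_ctx p q u v : feq u v -> feq (p ++ u ++ q) (p ++ v ++ q).
Proof.
  intro H. induction H.
  - apply feq_step, step_ctx; auto.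
  - apply feq_refl.
  - apply feq_sym; auto.
  - eapply feq_trans; eauto.
Qed.
Lemma feq_app u u' v v' : feq u u' -> feq v v' -> feq (u ++ v) (u' ++ v').
Proof.
  intros H1 H2. apply feq_trans with (u' ++ v).
  - pose proof (feq_ctx [] v _ _ H1) as H. simpl in H. exact H.
  - pose proof (feq_ctx u' [] _ _ H2) as H. rewrite !app_nil_r in H. exact H.
Qed.
Lemma feq_cons l u v : feq u v -> feq (l :: u) (l :: v).
Proof. intro H. apply (feq_app [l] [l] u v); auto using feq_refl. Qed.

Lemma cons_act l w : red w -> feq (l :: w) (act l w).
Proof.
  intro H. destruct l as [x|x].
  - destruct (hdA_red _ H) as [_ [_ H3]]. simpl.
    destruct w as [|[y|y] w']; simpl in *.
    + rewrite (grp_mul1r HA). unfold mkA; destruct (decA x eA).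
      * subst. apply feq_step. apply (fp_delA mulA eA mulB eB [] []).
      * apply feq_refl.
    + eapply feq_trans. apply feq_step. apply (fp_mergeA mulA eA mulB eB [] w').
      simpl. unfold mkA; destruct (decA (mulA x y) eA).
      * rewrite e. apply feq_step. apply (fp_delA mulA eA mulB eB [] w').
      * apply feq_refl.
    + rewrite (grp_mul1r HA). unfold mkA; destruct (decA x eA).
      * subst. apply feq_step. apply (fp_delA mulA eA mulB eB [] _).
      * apply feq_refl.
  - destruct (hdB_red _ H) as [_ [_ H3]]. simpl.
    destruct w as [|[y|y] w']; simpl in *.
    + rewrite (grp_mul1r HB). unfold mkB; destruct (decB x eB).
      * subst. apply feq_step. apply (fp_delB mulA eA mulB eB [] []).
      * apply feq_refl.
    + rewrite (grp_mul1r HB). unfold mkB; destruct (decB x eB).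
      * subst. apply feq_step. apply (fp_delB mulA eA mulB eB [] _).
      * apply feq_refl.
    + eapply feq_trans. apply feq_step. apply (fp_mergeB mulA eA mulB eB [] w').
      simpl. unfold mkB; destruct (decB (mulB x y) eB).
      * rewrite e. apply feq_step. apply (fp_delB mulA eA mulB eB [] w').
      * apply feq_refl.
Qed.

Lemma feq_nf_self u : feq u (nf u).
Proof.
  induction u as [|l u IH]; simpl. apply feq_refl.
  eapply feq_trans. apply feq_cons, IH. apply cons_act, nf_red.
Qed.
Lemma nf_feq u v : nf u = nf v -> feq u v.
Proof.
  intro H. eapply feq_trans. apply feq_nf_self. rewrite H. apply feq_sym, feq_nf_self.
Qed.

Lemma len_act l w : length (act l w) <= S (length w).
Proof.
  destruct l as [x|x]; simpl.
  - destruct w as [|[y|y] w]; simpl; unfold mkA; destruct decA; simpl; lia.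
  - destruct w as [|[y|y] w]; simpl; unfold mkB; destruct decB; simpl; lia.
Qed.
Lemma len_nf u : length (nf u) <= length u.
Proof.
  induction u; simpl. lia. pose proof (len_act a (nf u)). lia.
Qed.

Lemma inv_app u v : finv (u ++ v) = finv v ++ finv u.
Proof. unfold fp_inv. rewrite map_app, rev_app_distr. reflexivity. Qed.
Lemma inv_cons l u : finv (l :: u) = finv u ++ [fp_letter_inv invA invB l].
Proof. reflexivity. Qed.
Lemma inv_inv u : finv (finv u) = u.
Proof.
  unfold fp_inv. rewrite map_rev, rev_involutive, map_map.
  induction u as [|[x|x] u IH]; simpl; f_equal; auto.
  - rewrite (g_inv_inv HA). reflexivity.
  - rewrite (g_inv_inv HB). reflexivity.
Qed.
Lemma len_inv u : length (finv u) = length u.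
Proof. unfold fp_inv. rewrite length_rev, length_map. reflexivity. Qed.

Lemma inv_cancel u : feq (u ++ finv u) [].
Proof.
  induction u as [|l u IH]; simpl. apply feq_refl.
  rewrite inv_cons, app_assoc.
  apply feq_trans with (l :: [] ++ [fp_letter_inv invA invB l]).
  - apply feq_cons. apply (feq_app _ _ _ _ IH (feq_refl _)).
  - simpl. destruct l as [x|x]; simpl.
    + eapply feq_trans. apply feq_step. apply (fp_mergeA mulA eA mulB eB [] []).
      simpl. rewrite (grp_mulVr HA). apply feq_step. apply (fp_delA mulA eA mulB eB [] []).
    + eapply feq_trans. apply feq_step. apply (fp_mergeB mulA eA mulB eB [] []).
      simpl. rewrite (grp_mulVr HB). apply feq_step. apply (fp_delB mulA eA mulB eB [] []).
Qed.
Lemma inv_cancel_l u : feq (finv u ++ u) [].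
Proof. pose proof (inv_cancel (finv u)). rewrite inv_inv in H. exact H. Qed.

Lemma feq_inv u v : feq u v -> feq (finv u) (finv v).
Proof.
  intro H.
  apply feq_trans with (finv u ++ (v ++ finv v)).
  { pose proof (feq_app _ _ _ _ (feq_refl (finv u)) (feq_sym _ _ (inv_cancel v))) as H1.
    rewrite app_nil_r in H1. exact H1. }
  apply feq_trans with ((finv u ++ u) ++ finv v).
  { rewrite <- app_assoc. apply feq_app. apply feq_refl.
    apply feq_app. apply feq_sym, H. apply feq_refl. }
  apply (feq_app _ [] _ _ (inv_cancel_l u) (feq_refl _)).
Qed.

Lemma red_app u v : red u -> red v ->
  (forall s, lside u = Some s -> fside v = Some s -> False) -> red (u ++ v).
Proof.
  induction u as [|l u IH]; simpl; auto.
  intros [H1 [H2 H3]] Hv Hs. split; auto. split.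
  - apply IH; auto. intros s Hl Hf. apply (Hs s); auto.
    unfold lside in *. simpl. destruct (rev u); simpl in *; congruence.
  - destruct u as [|l' u']; simpl in *.
    + intro Hf. apply (Hs (side l)); auto.
    + exact H3.
Qed.
Lemma red_app_inv u v : red (u ++ v) -> red u /\ red v.
Proof.
  induction u as [|l u IH]; simpl; auto.
  intros [H1 [H2 H3]]. destruct (IH H2). repeat split; auto.
  destruct u; simpl in *; auto. discriminate.
Qed.
Lemma lside_snoc u l : lside (u ++ [l]) = Some (side l).
Proof. unfold lside. rewrite rev_app_distr. reflexivity. Qed.
Lemma lside_cons l u : u <> [] -> lside (l :: u) = lside u.
Proof.
  intro H. unfold lside. simpl. destruct (rev u) eqn:E.
  - destruct u; [congruence|]. simpl in E. destruct (rev u); discriminate.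
  - reflexivity.
Qed.
Lemma red_snoc_inv u l : red (u ++ [l]) -> nontriv l /\ lside u <> Some (side l).
Proof.
  intro H. split.
  - destruct (red_app_inv _ _ H) as [_ [H1 _]]. exact H1.
  - induction u as [|l0 u IH]; simpl in *.
    + unfold lside; simpl; discriminate.
    + destruct H as [H1 [H2 H3]]. destruct u as [|l1 u'].
      * simpl in *. unfold lside; simpl. congruence.
      * rewrite lside_cons by discriminate. apply IH; auto.
Qed.
Lemma side_inv l : side (fp_letter_inv invA invB l) = side l.
Proof. destruct l; reflexivity. Qed.
Lemma nontriv_inv l : nontriv l -> nontriv (fp_letter_inv invA invB l).
Proof. destruct l; simpl; intro; [apply (g_inv_ne HA)|apply (g_inv_ne HB)]; auto. Qed.
Lemma fside_inv u : fside (finv u) = lside u.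
Proof.
  unfold fp_inv, lside. rewrite <- map_rev. destruct (rev u); simpl; auto.
  rewrite side_inv. reflexivity.
Qed.

Lemma lside_inv u : lside (finv u) = fside u.
Proof. rewrite <- fside_inv, inv_inv. reflexivity. Qed.
Lemma red_inv u : red u -> red (finv u).
Proof.
  induction u as [|l u IH]; simpl; auto.
  intros [H1 [H2 H3]]. rewrite inv_cons. apply red_app; auto.
  - simpl. repeat split; auto. apply nontriv_inv; auto. discriminate.
  - intros s Hl Hf. rewrite lside_inv in Hl. simpl in Hf. rewrite side_inv in Hf.
    congruence.
Qed.

Lemma feq_eq L R : L = R -> feq L R.
Proof. intros ->. apply feq_refl. Qed.
Lemma sA p q x y L : L = p ++ inl x :: inl y :: q -> feq L (p ++ inl (mulA x y) :: q).
Proof. intros ->. apply feq_step, fp_mergeA. Qed.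
Lemma sB p q x y L : L = p ++ inr x :: inr y :: q -> feq L (p ++ inr (mulB x y) :: q).
Proof. intros ->. apply feq_step, fp_mergeB. Qed.
Lemma dA p q L : L = p ++ inl eA :: q -> feq L (p ++ q).
Proof. intros ->. apply feq_step, fp_delA. Qed.
Lemma dB p q L : L = p ++ inr eB :: q -> feq L (p ++ q).
Proof. intros ->. apply feq_step, fp_delB. Qed.

Ltac leq := solve [ repeat rewrite <- app_assoc; simpl; repeat rewrite <- app_assoc; simpl; reflexivity ].

Variables (a : A) (b : B).
Hypothesis ha : a <> eA.
Hypothesis hb : b <> eB.
Hypothesis hord : ~ has_order2 mulA eA a \/ ~ has_order2 mulB eB b.

Definition c : W := [inl a; inr b].
Definition ci : W := [inr (invB b); inl (invA a)].
Lemma finv_c : finv c = ci. Proof. reflexivity. Qed.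
Lemma finv_ci : finv ci = c. Proof. rewrite <- finv_c. apply inv_inv. Qed.
Definition Q n : W := fp_npow ([inr b; inl a] : W) n.
Notation P n := (fp_npow c n).
Notation zp m := (fp_zpow invA invB c m).

Lemma npow_comm (u : W) n : fp_npow u n ++ u = u ++ fp_npow u n.
Proof.
  induction n; simpl. rewrite app_nil_r; reflexivity.
  unfold fp_mul. rewrite <- app_assoc, IHn. reflexivity.
Qed.
Lemma npow_S_r (u : W) n : fp_npow u (S n) = fp_npow u n ++ u.
Proof. simpl. unfold fp_mul. rewrite npow_comm. reflexivity. Qed.
Lemma inv_npow (u : W) n : finv (fp_npow u n) = fp_npow (finv u) n.
Proof.
  induction n; simpl. reflexivity. unfold fp_mul. rewrite inv_app, IHn.
  rewrite <- npow_S_r. reflexivity.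
Qed.
Lemma len_npow (u : W) n : length (fp_npow u n) = n * length u.
Proof. induction n; simpl; auto. unfold fp_mul. rewrite length_app, IHn. lia. Qed.

Lemma fside_P n : fside (P n) <> Some false.
Proof. destruct n; simpl; discriminate. Qed.
Lemma lside_P n : lside (P n) <> Some true.
Proof. destruct n. unfold lside; simpl; discriminate. rewrite npow_S_r. unfold c.
  change [inl a; inr b] with ([inl a] ++ [inr b] : W). rewrite app_assoc, lside_snoc. discriminate. Qed.
Lemma red_P n : red (P n).
Proof.
  induction n; simpl; auto. unfold fp_mul, c. simpl.
  repeat split; auto using fside_P; discriminate.
Qed.
Lemma ia : invA a <> eA. Proof. apply (g_inv_ne HA); auto. Qed.
Lemma ib : invB b <> eB. Proof. apply (g_inv_ne HB); auto. Qed.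
Lemma fside_Pi n : fside (fp_npow ci n) <> Some true.
Proof. destruct n; simpl; discriminate. Qed.
Lemma red_Pi n : red (fp_npow ci n).
Proof.
  pose proof ia; pose proof ib.
  induction n; simpl; auto. unfold fp_mul, ci. simpl.
  repeat split; auto using fside_Pi; discriminate.
Qed.
Lemma red_Q n : red (Q n).
Proof.
  induction n; simpl; auto. unfold fp_mul. simpl.
  repeat split; auto; try discriminate. destruct n; simpl; discriminate.
Qed.

Lemma zpow_pos k : zp (Z.of_nat k) = P k.
Proof.
  unfold fp_zpow. rewrite (proj2 (Z.leb_le _ _)) by lia. rewrite Nat2Z.id. reflexivity.
Qed.
Lemma zpow_neg k : zp (- Z.of_nat k) = fp_npow ci k.
Proof.
  destruct k. reflexivity.
  unfold fp_zpow. rewrite (proj2 (Z.leb_gt _ _)) by lia.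
  rewrite Z.opp_involutive, Nat2Z.id, finv_c. reflexivity.
Qed.
Lemma zpow_cases m : (exists k, m = Z.of_nat k /\ zp m = P k) \/
                     (exists k, m = (- Z.of_nat k)%Z /\ zp m = fp_npow ci k).
Proof.
  destruct (Z_le_gt_dec 0 m).
  - left. exists (Z.to_nat m). assert (m = Z.of_nat (Z.to_nat m)) by lia.
    split; auto. rewrite H at 1. apply zpow_pos.
  - right. exists (Z.to_nat (- m)). assert (m = (- Z.of_nat (Z.to_nat (- m)))%Z) by lia.
    split; auto. rewrite H at 1. apply zpow_neg.
Qed.
Lemma red_zp m : red (zp m).
Proof. destruct (zpow_cases m) as [[k [_ ->]]|[k [_ ->]]]; auto using red_P, red_Pi. Qed.
Lemma len_zp m : exists k, length (zp m) = 2 * k.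
Proof.
  destruct (zpow_cases m) as [[k [_ ->]]|[k [_ ->]]]; exists k; rewrite len_npow; simpl; lia.
Qed.

Lemma zp_succ m : feq (zp m ++ c) (zp (m + 1)).
Proof.
  destruct (zpow_cases m) as [[k [-> E]]|[k [-> E]]]; rewrite E.
  - replace (Z.of_nat k + 1)%Z with (Z.of_nat (S k)) by lia. rewrite zpow_pos, npow_S_r.
    apply feq_refl.
  - destruct k as [|k].
    + replace (- Z.of_nat 0 + 1)%Z with (Z.of_nat 1) by lia. rewrite zpow_pos.
      simpl. apply feq_refl.
    + replace (- Z.of_nat (S k) + 1)%Z with (- Z.of_nat k)%Z by lia. rewrite zpow_neg.
      rewrite npow_S_r, <- app_assoc. rewrite <- (app_nil_r (fp_npow ci k)) at 2.
      apply feq_app. apply feq_refl. rewrite <- finv_c. apply inv_cancel_l.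
Qed.
Lemma zp_pred m : feq (zp m ++ ci) (zp (m - 1)).
Proof.
  pose proof (zp_succ (m - 1)) as H. replace (m - 1 + 1)%Z with m in H by lia.
  apply feq_trans with ((zp (m - 1) ++ c) ++ ci).
  - apply feq_app. apply feq_sym; auto. apply feq_refl.
  - rewrite <- app_assoc. rewrite <- (app_nil_r (zp (m - 1))) at 2.
    apply feq_app. apply feq_refl. rewrite <- finv_c. apply inv_cancel.
Qed.
Lemma inv_zp m : exists m', finv (zp m) = zp m'.
Proof.
  destruct (zpow_cases m) as [[k [_ ->]]|[k [_ ->]]].
  - exists (- Z.of_nat k)%Z. rewrite zpow_neg, inv_npow, finv_c. reflexivity.
  - exists (Z.of_nat k). rewrite zpow_pos, inv_npow, finv_ci. reflexivity.
Qed.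

Lemma P_snoc_a n : P n ++ [inl a] = inl a :: Q n.
Proof. unfold Q in *. induction n; simpl. reflexivity. unfold fp_mul. simpl. rewrite IHn. reflexivity. Qed.
Lemma b_cons_P n : inr b :: P n = Q n ++ [inr b].
Proof. unfold Q in *. induction n; simpl. reflexivity. unfold fp_mul. simpl. rewrite <- IHn. reflexivity. Qed.

Lemma Q_ne_zp n m : 1 <= n -> Q n <> zp m.
Proof.
  intros Hn E. destruct n as [|n]; [lia|].
  destruct (zpow_cases m) as [[k [_ E2]]|[k [_ E2]]]; rewrite E2 in E.
  - destruct k; simpl in E; discriminate.
  - destruct k; simpl in E; [discriminate|]. unfold fp_mul in E. simpl in E.
    injection E as E1 E3.
    destruct hord as [Ho|Ho]; apply Ho; split; auto.
    + rewrite E3 at 2. apply (grp_mulVr HA).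
    + rewrite E1 at 2. apply (grp_mulVr HB).
Qed.

Lemma conj_c_core u n : (u = c \/ u = ci) -> feq (u ++ P n ++ finv u) (P n).
Proof.
  intros [-> | ->].
  - rewrite finv_c, app_assoc, <- npow_comm, <- app_assoc.
    rewrite <- (app_nil_r (P n)) at 2. apply feq_app. apply feq_refl.
    rewrite <- finv_c. apply inv_cancel.
  - rewrite finv_ci, npow_comm, app_assoc.
    apply (feq_app _ [] _ _). rewrite <- finv_c. apply inv_cancel_l. apply feq_refl.
Qed.
Lemma shift X X' u n : (u = c \/ u = ci) -> feq X' (X ++ u) ->
  feq (X' ++ P n ++ finv X') (X ++ P n ++ finv X).
Proof.
  intros Hu H. apply feq_trans with ((X ++ u) ++ P n ++ (finv u ++ finv X)).
  - apply feq_app; auto. apply feq_app. apply feq_refl.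
    rewrite <- inv_app. apply feq_inv; auto.
  - replace ((X ++ u) ++ P n ++ finv u ++ finv X) with (X ++ (u ++ P n ++ finv u) ++ finv X)
      by (rewrite <- !app_assoc; reflexivity).
    apply feq_ctx. apply conj_c_core; auto.
Qed.

Lemma nf_Y_Q X n m : feq (X ++ P n ++ finv X) (Q n) -> 1 <= n ->
  nf (X ++ P n ++ finv X) = zp m -> False.
Proof.
  intros H Hn E. apply (Q_ne_zp n m Hn). rewrite <- E.
  rewrite (feq_nf _ _ H). symmetry. apply red_nf, red_Q.
Qed.
Lemma parity X n m Wd : feq (X ++ P n ++ finv X) Wd -> red Wd -> Nat.odd (length Wd) = true ->
  nf (X ++ P n ++ finv X) = zp m -> False.
Proof.
  intros H HW Ho E. rewrite (feq_nf _ _ H), (red_nf _ HW) in E.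
  destruct (len_zp m) as [k Hk]. rewrite E, Hk in Ho.
  rewrite Nat.odd_mul in Ho. simpl in Ho. discriminate.
Qed.

Lemma odd_of n k : n = 2 * k + 1 -> Nat.odd n = true.
Proof. intros ->. rewrite Nat.odd_add, Nat.odd_mul. reflexivity. Qed.
Ltac lensolve := repeat (first [rewrite length_app | rewrite len_npow | rewrite len_inv | progress simpl | progress unfold fp_mul]); lia.

Lemma key N : forall X, red X -> length X <= N -> forall n m, 1 <= n ->
  nf (X ++ P n ++ finv X) = zp m -> exists j, feq X (zp j).
Proof.
  induction N as [|N IH]; intros X HX HL n m Hn HY.
  { destruct X; [|simpl in HL; lia]. exists (Z.of_nat 0). rewrite zpow_pos. apply feq_refl. }
  destruct X as [|l0 X1].
  { exists (Z.of_nat 0). rewrite zpow_pos. apply feq_refl. }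
  destruct (@exists_last _ (l0 :: X1)) as [X0 [l HX0]]; [discriminate|].
  rewrite HX0 in *. clear l0 X1 HX0.
  destruct (red_app_inv _ _ HX) as [HX0r _].
  destruct (red_snoc_inv _ _ HX) as [Hl Hls].
  rewrite length_app in HL. simpl in HL.
  destruct l as [x|y]; simpl in Hl, Hls.
  - destruct (decA (mulA x a) eA) as [Exa|Nxa].
    + destruct X0 as [|l1 X2].
      * exfalso. apply (nf_Y_Q ([] ++ [inl x]) n m); auto.
        assert (Hx : invA x = a).
        { rewrite (g_cancel HA Exa). apply (g_inv_inv HA). }
        simpl. change (finv [inl x]) with ([inl (invA x)] : W). rewrite Hx.
        rewrite P_snoc_a.
        eapply feq_trans. apply (sA [] (Q n) x a); reflexivity.
        rewrite Exa. apply (dA [] (Q n)). reflexivity.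
      * destruct (@exists_last _ (l1 :: X2)) as [X1 [l' HX1]]; [discriminate|].
        rewrite HX1 in *. clear l1 X2 HX1.
        rewrite length_app in HL. simpl in HL.
        destruct l' as [x'|y]. { rewrite lside_snoc in Hls. simpl in Hls. congruence. }
        set (X' := X1 ++ [inr (mulB y b)]).
        assert (HE : feq (((X1 ++ [inr y]) ++ [inl x]) ++ c) X').
        { eapply feq_trans. apply (sA (X1 ++ [inr y]) [inr b] x a). unfold c; leq.
          rewrite Exa. eapply feq_trans. apply (dA (X1 ++ [inr y]) [inr b]). reflexivity.
          apply (sB X1 [] y b). leq. }
        assert (HL' : length (nf X') <= N).
        { pose proof (len_nf X') as H. assert (length X' = length X1 + 1) by (unfold X'; rewrite length_app; reflexivity). lia. }
        assert (HY' : nf (nf X' ++ P n ++ finv (nf X')) = zp m).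
        { rewrite <- HY. apply feq_nf. apply shift with c; auto.
          eapply feq_trans. apply feq_sym, feq_nf_self. apply feq_sym; auto. }
        destruct (IH (nf X') (nf_red _) HL' n m Hn HY') as [j Hj].
        exists (j - 1)%Z.
        eapply feq_trans; [|apply zp_pred].
        eapply feq_trans with (((X1 ++ [inr y]) ++ [inl x]) ++ c ++ ci).
        { rewrite <- (app_nil_r ((X1 ++ [inr y]) ++ [inl x])) at 1. apply feq_app. apply feq_refl.
          apply feq_sym. rewrite <- finv_c. apply inv_cancel. }
        rewrite app_assoc. apply feq_app; [|apply feq_refl].
        eapply feq_trans. apply HE. eapply feq_trans. apply feq_nf_self. auto.
    + exfalso. destruct n as [|n']; [lia|].
      set (x' := invA x).
      apply (parity (X0 ++ [inl x]) (S n') m (X0 ++ inl (mulA x a) :: inr b :: P n' ++ inl x' :: finv X0)); auto.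
      * apply (sA X0 _ x a). rewrite inv_app. simpl. unfold fp_mul, c. leq.
      * apply red_app; auto.
        -- simpl. repeat split; auto; try discriminate.
           ++ apply red_app; auto using red_P.
              ** simpl. repeat split; auto. apply (g_inv_ne HA); auto. 
                 apply red_inv; auto. rewrite fside_inv; auto.
              ** intros s H1 H2. simpl in H2. injection H2 as <-. apply (lside_P n'); auto.
           ++ destruct n'; simpl; discriminate.
        -- intros s H1 H2. simpl in H2. injection H2 as <-. auto.
      * apply (odd_of _ (length X0 + n' + 1)). lensolve.
  - destruct (decB y b) as [Eyb|Nyb].
    + subst y. destruct X0 as [|l1 X2].
      * exfalso. apply (nf_Y_Q ([] ++ [inr b]) n m); auto.
        simpl. change (finv [inr b]) with ([inr (invB b)] : W).
        rewrite app_comm_cons, b_cons_P.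
        eapply feq_trans. apply (sB (Q n) [] b (invB b)). leq.
        rewrite (grp_mulVr HB). rewrite <- (app_nil_r (Q n)) at 2.
        apply (dB (Q n) []). reflexivity.
      * destruct (@exists_last _ (l1 :: X2)) as [X1 [l' HX1]]; [discriminate|].
        rewrite HX1 in *. clear l1 X2 HX1.
        rewrite length_app in HL. simpl in HL.
        destruct l' as [x|y']; [|rewrite lside_snoc in Hls; simpl in Hls; congruence].
        set (X' := X1 ++ [inl (mulA x (invA a))]).
        assert (HE : feq (((X1 ++ [inl x]) ++ [inr b]) ++ ci) X').
        { eapply feq_trans. apply (sB (X1 ++ [inl x]) [inl (invA a)] b (invB b)). unfold ci; leq.
          rewrite (grp_mulVr HB). eapply feq_trans. apply (dB (X1 ++ [inl x]) [inl (invA a)]). reflexivity.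
          apply (sA X1 [] x (invA a)). leq. }
        assert (HL' : length (nf X') <= N).
        { pose proof (len_nf X') as H. assert (length X' = length X1 + 1) by (unfold X'; rewrite length_app; reflexivity). lia. }
        assert (HY' : nf (nf X' ++ P n ++ finv (nf X')) = zp m).
        { rewrite <- HY. apply feq_nf. apply shift with ci; auto.
          eapply feq_trans. apply feq_sym, feq_nf_self. apply feq_sym; auto. }
        destruct (IH (nf X') (nf_red _) HL' n m Hn HY') as [j Hj].
        exists (j + 1)%Z.
        eapply feq_trans; [|apply zp_succ].
        eapply feq_trans with (((X1 ++ [inl x]) ++ [inr b]) ++ ci ++ c).
        { rewrite <- (app_nil_r ((X1 ++ [inl x]) ++ [inr b])) at 1. apply feq_app. apply feq_refl.
          apply feq_sym. rewrite <- finv_ci. apply inv_cancel. }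
        rewrite app_assoc. apply feq_app; [|apply feq_refl].
        eapply feq_trans. apply HE. eapply feq_trans. apply feq_nf_self. auto.
    + exfalso. destruct n as [|n']; [lia|].
      set (y' := invB y).
      assert (Hby : mulB b y' <> eB).
      { intro E. apply Nyb. rewrite (g_cancel HB E). unfold y'. symmetry. apply (g_inv_inv HB). }
      apply (parity (X0 ++ [inr y]) (S n') m
        (X0 ++ inr y :: P n' ++ inl a :: inr (mulB b y') :: finv X0)); auto.
      * eapply feq_trans. apply (sB (X0 ++ inr y :: P n' ++ [inl a]) (finv X0) b y').
        rewrite inv_app, npow_S_r. unfold c. leq.
        apply feq_eq. leq.
      * apply red_app; auto.
        -- simpl. repeat split; auto.
           ++ apply red_app; auto using red_P.
              ** simpl. repeat split; auto; try discriminate.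
                 apply red_inv; auto. rewrite fside_inv; auto.
              ** intros s H1 H2. simpl in H2. injection H2 as <-. apply (lside_P n'); auto.
           ++ destruct n'; simpl; discriminate.
        -- intros s H1 H2. simpl in H2. injection H2 as <-. auto.
      * apply (odd_of _ (length X0 + n' + 1)). lensolve.
Qed.

Lemma conj_core x k m : 1 <= k -> feq (x ++ P k ++ finv x) (zp m) ->
  exists j, feq x (zp j).
Proof.
  intros Hk H.
  assert (HY : nf (nf x ++ P k ++ finv (nf x)) = zp m).
  { rewrite <- (red_nf _ (red_zp m)). apply feq_nf. eapply feq_trans; [|apply H].
    apply feq_app. apply feq_sym, feq_nf_self. apply feq_app. apply feq_refl.
    apply feq_inv. apply feq_sym, feq_nf_self. }
  destruct (key (length (nf x)) (nf x) (nf_red _) (le_n _) k m Hk HY) as [j Hj].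
  exists j. eapply feq_trans. apply feq_nf_self. exact Hj.
Qed.

Definition Hc := fp_cyclic mulA invA eA mulB invB eB c.

Lemma part1 x : ~ Hc x -> forall y, Hc y -> fp_conj_mem mulA invA eA mulB invB eB Hc x y ->
  feq y [].
Proof.
  intros Hx y [m Hy] [z [[n Hz] Hyz]]. unfold fp_mul in Hyz.
  assert (Htriv : feq z [] -> feq y []).
  { intro Hz0. eapply feq_trans. apply Hyz. eapply feq_trans; [|apply (inv_cancel x)].
    apply feq_app. apply feq_refl. apply (feq_app _ [] _ _ Hz0 (feq_refl _)). }
  destruct (zpow_cases n) as [[k [_ E]]|[k [_ E]]]; rewrite E in Hz.
  - destruct k as [|k]. apply Htriv; exact Hz.
    exfalso. apply Hx. apply (conj_core x (S k) m). lia.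
    eapply feq_trans; [|apply Hy]. apply feq_sym. eapply feq_trans. apply Hyz.
    apply feq_app. apply feq_refl. apply feq_app; auto using feq_refl.
  - destruct k as [|k]. apply Htriv; exact Hz.
    exfalso. apply Hx. destruct (inv_zp m) as [m' Hm'].
    apply (conj_core x (S k) m'). lia.
    rewrite <- Hm'. apply feq_sym.
    eapply feq_trans. apply feq_inv, feq_sym, Hy.
    eapply feq_trans. apply feq_inv, Hyz.
    rewrite !inv_app, inv_inv, <- app_assoc.
    apply feq_app. apply feq_refl. apply feq_app; [|apply feq_refl].
    eapply feq_trans. apply feq_inv, Hz. rewrite inv_npow, finv_ci. apply feq_refl.
Qed.

Lemma part2 : fp_conj_separated mulA invA eA mulB invB eB Hc.
Proof.
  intros x Hx. exists [[]]. intros y Hy Hm. exists []. split. left; reflexivity.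
  apply (part1 x Hx y Hy Hm).
Qed.
End FP.

Theorem lemma2p4
  (A : Type) (mulA : A -> A -> A) (invA : A -> A) (eA : A)
  (HA : is_group mulA invA eA)
  (B : Type) (mulB : B -> B -> B) (invB : B -> B) (eB : B)
  (HB : is_group mulB invB eB)
  (a : A) (b : B) (ha : a <> eA) (hb : b <> eB)
  (hord : ~ has_order2 mulA eA a \/ ~ has_order2 mulB eB b) :
  let ab := (inl a :: inr b :: nil) : fword A B in
  let H := fp_cyclic mulA invA eA mulB invB eB ab in
  (forall x : fword A B, ~ H x ->
     forall y, H y -> fp_conj_mem mulA invA eA mulB invB eB H x y ->
       fp_eq mulA eA mulB eB y (fp_one A B))
  /\ fp_conj_separated mulA invA eA mulB invB eB H.
Proof.
  intros ab H. split.
  - exact (part1 A mulA invA eA HA B mulB invB eB HB a b ha hb hord).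
  - exact (part2 A mulA invA eA HA B mulB invB eB HB a b ha hb hord).
Qed.
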